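(* Let $p=3$, $N\ge1$ and $\mathcal{L}=\{0,1,\ldots,3N-3\}$. Then $H^{\mathsf{MD}}_\mathcal{L}\ge0$ and $H^{\mathsf{MD}}_\mathcal{L}\Psi^{\mathsf{MD}}_N=0$. In particular, $\Psi^{\mathsf{MD}}_N$ is an exact zero-energy ground state of $H^{\mathsf{MD}}_\mathcal{L}$.
   Context: Setting. Fermionic creation and annihilation operators $c_k^*,c_k$ are indexed by lattice sites $k\in\mathbb{Z}$ (orbitals), with $\hat n_k=c_k^*c_k$. Let $\gamma>0$. Monomer-dimer Hamiltonian. For $j\in\mathbb{Z}$ let $$B_j=c_{j+2}c_{j+1}+3e^{-2\gamma^2}c_{j+3}c_j .$$ The formal monomer-dimer Hamiltonian is $$H^{\mathsf{MD}}=\sum_j\Bigl(4e^{-3\gamma^2/2}\hat n_j\hat n_{j+2}+B_j^*B_j\Bigr).$$ Equivalently, it is the sum over $k$ of $$\hat n_k\hat n_{k+1}+4e^{-3\gamma^2/2}\hat n_k\hat n_{k+2}+9e^{-4\gamma^2}\hat n_k\hat n_{k+3}+3e^{-2\gamma^2}\bigl(c^*_{k+1}c^*_{k+2}c_{k+3}c_k+c_k^*c_{k+3}^*c_{k+2}c_{k+1}\bigr).$$ $H^{\mathsf{MD}}_\mathcal{L}$ is defined with free boundary conditions, i.e. keeping only terms all of whose site indices lie in $\mathcal{L}$. Monomer-dimer wave function. For $k\in\mathbb{Z}$ let $$A_{\{k\}}=c_{3k}^*,\qquad A_{\{k,k+1\}}=-3e^{-2\gamma^2}c_{3k+1}^*c_{3k+2}^*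 .$$ Then $$\Psi_N^{\mathsf{MD}}=\sum_{(X_1,\ldots,X_D)}A_{X_1}\cdots A_{X_D}|\mathrm{vacuum}\rangle,$$ where the sum runs over all partitions of $\{0,1,\ldots,N-1\}$ into monomers $\{k\}$ and dimers $\{k,k+1\}$, labeled from left to right. *)

(* Defs.v *)
From mathcomp Require Import all_boot all_order all_algebra.
From mathcomp Require Import complex.
From mathcomp Require Import reals sequences exp.
Set Implicit Arguments. Unset Strict Implicit. Unset Printing Implicit Defensive.
Import GRing.Theory Num.Theory.
Local Open Scope ring_scope.
Local Open Scope complex_scope.

(* Fermionic Fock space on the finite lattice of sites {0,...,M-1}:
   a vector is a complex amplitude for every occupation configuration
   (the set S of occupied sites).  Basis state |S> = c^*_{s1} ... c^*_{sr}|vac>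
   with s1 < ... < sr (Jordan-Wigner ordering). *)
Definition fock (R : realType) (M : nat) := {set 'I_M} -> R[i].

Section Fock.
Context {R : realType} {M : nat}.
Local Notation fk := (fock R M).

Definition jwsign (S : {set 'I_M}) (i : 'I_M) : R[i] :=
  (-1) ^+ #|[set j in S | (j < i)%N]|.

Definition ann (k : nat) (f : fk) : fk := fun S =>
  match (insub k : option 'I_M) with
  | Some i => if i \in S then 0 else jwsign S i * f (i |: S)
  | None => 0
  end.

(* creation operator c_k^* (the adjoint of ann k) *)
Definition cre (k : nat) (f : fk) : fk := fun S =>
  match (insub k : option 'I_M) with
  | Some i => if i \in S then jwsign S i * f (S :\ i) else 0
  | None => 0
  end.

Definition num (k : nat) (f : fk) : fk := cre k (ann k f).

Definition vac : fk := fun S => if S == set0 then 1 else 0.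

Definition fdot (f g : fk) : R[i] := \sum_(S : {set 'I_M}) (f S)^* * g S.

(* Monomer-dimer Hamiltonian H^MD_L with free boundary conditions on
   L = {0,...,M-1}: the sum over k of the expanded terms, keeping only those
   terms all of whose site indices lie in L. *)
Definition HMD (g : R) (f : fk) : fk := fun S =>
  \sum_(k < M)
    ( (if (k.+1 < M)%N then num k (num k.+1 f) S else 0)
    + (4 * expR (- (3 * g ^+ 2) / 2))%:C
        * (if (k.+2 < M)%N then num k (num k.+2 f) S else 0)
    + (9 * expR (- (4 * g ^+ 2)))%:C
        * (if (k.+3 < M)%N then num k (num k.+3 f) S else 0)
    + (3 * expR (- (2 * g ^+ 2)))%:C
        * (if (k.+3 < M)%N then
             cre k.+1 (cre k.+2 (ann k.+3 (ann k f))) S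
           + cre k (cre k.+3 (ann k.+2 (ann k.+1 f))) S
           else 0)).

End Fock.

(* blocks of a monomer-dimer partition: monomer {k} or dimer {k, k+1} *)
Inductive mdblock := Mono of nat | Dimer of nat.

(* all partitions of {s, s+1, ..., s+n-1} into monomers and dimers,
   each listed from left to right *)
Fixpoint md_partitions (s n : nat) {struct n} : seq (seq mdblock) :=
  match n with
  | 0 => [:: [::]]
  | 1 => [:: [:: Mono s]]
  | (m.+1 as n1).+1 =>
      [seq Mono s :: P | P <- md_partitions s.+1 n1]
      ++ [seq Dimer s :: P | P <- md_partitions s.+2 m]
  end.

Section Psi.
Context {R : realType} {M : nat}.
Local Notation fk := (fock R M).

Definition Ablock (g : R) (X : mdblock) (f : fk) : fk :=
  match X with
  | Mono k => cre (3 * k) f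
  | Dimer k => fun S => (- (3 * expR (- (2 * g ^+ 2))))%:C
                        * cre (3 * k).+1 (cre (3 * k).+2 f) S
  end.

Definition PsiMD (g : R) (N : nat) : fk := fun S =>
  \sum_(P <- md_partitions 0 N) foldr (Ablock g) vac P S.

End Psi.

(* Main.v *)
Require Import Defs.
From mathcomp Require Import all_boot all_order all_algebra.
From mathcomp Require Import complex.
From mathcomp Require Import boolp reals sequences exp.
From mathcomp Require Import ring zify.
Set Implicit Arguments. Unset Strict Implicit. Unset Printing Implicit Defensive.
Import GRing.Theory Num.Theory.
Local Open Scope ring_scope.
Local Open Scope complex_scope.

Section Ops.
Context {R : realType} {M : nat}.
Local Notation fk := (fock R M).
Implicit Types (f h : fk) (S : {set 'I_M}).
Local Notation jwsign := (@jwsign R M).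

Lemma conjM (x y : R[i]) : Num.conj (x * y) = Num.conj x * Num.conj y.
Proof. exact: rmorphM. Qed.
Lemma conjD (x y : R[i]) : Num.conj (x + y) = Num.conj x + Num.conj y.
Proof. exact: rmorphD. Qed.

Lemma jw_sq S i : jwsign S i * jwsign S i = 1.
Proof. by rewrite /jwsign -exprMn mulrNN mulr1 expr1n. Qed.

Lemma jw_conj S i : Num.conj (jwsign S i) = jwsign S i.
Proof. by rewrite /jwsign rmorphXn rmorphN1. Qed.

Lemma jw_D1self S i : jwsign (S :\ i) i = jwsign S i.
Proof.
rewrite /jwsign; congr (_ ^+ _); apply: eq_card => j; rewrite !inE.
by case: (eqVneq j i) => [->|]; rewrite ?ltnn ?andbF.
Qed.

Lemma jw_U1self S i : jwsign (i |: S) i = jwsign S i.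
Proof.
rewrite /jwsign; congr (_ ^+ _); apply: eq_card => j; rewrite !inE.
by case: (eqVneq j i) => [->|]; rewrite ?ltnn ?andbF ?orbF.
Qed.

Lemma jw_U1 S x i : x \notin S ->
  jwsign (x |: S) i = (if (x < i)%N then - jwsign S i else jwsign S i).
Proof.
move=> xS; rewrite /jwsign; case: (ltnP x i) => h.
  rewrite (_ : [set j in x |: S | (j < i)%N] = x |: [set j in S | (j < i)%N]).
    by rewrite cardsU1 inE (negPf xS) /= exprS mulN1r.
  apply/setP => j; rewrite !inE.
  by case: (eqVneq j x) => [->|]; rewrite ?h ?andbT.
rewrite (_ : [set j in x |: S | (j < i)%N] = [set j in S | (j < i)%N]) //.
apply/setP => j; rewrite !inE.
by case: (eqVneq j x) => [->|] //=; rewrite ltnNge h andbF.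
Qed.

Lemma jw_D1 S x i : x \in S ->
  jwsign (S :\ x) i = (if (x < i)%N then - jwsign S i else jwsign S i).
Proof.
move=> xS; have := @jw_U1 (S :\ x) x i; rewrite setD11 setD1K // => ->//.
by case: (x < i)%N; rewrite ?opprK.
Qed.

Lemma numE k f S : num k f S =
  match (insub k : option 'I_M) with
  | Some i => if i \in S then f S else 0
  | None => 0 end.
Proof.
rewrite /num /cre /ann; case: insubP => [i _ _|_] //.
case: ifP => iS //; rewrite setD11 jw_D1self mulrA jw_sq mul1r setD1K //.
Qed.


Definition fadd f h : fk := fun S => f S + h S.
Definition fscale (c : R[i]) f : fk := fun S => c * f S.
Definition fzero : fk := fun _ => 0.
Definition fopp f : fk := fun S => - f S.

Lemma ann_add k f h : ann k (fadd f h) = fadd (ann k f) (ann k h).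
Proof.
apply/funext => S; rewrite /ann /fadd; case: insubP => [i _ _|_]; last by rewrite addr0.
by case: ifP => _; rewrite ?addr0 ?mulrDr.
Qed.

Lemma cre_add k f h : cre k (fadd f h) = fadd (cre k f) (cre k h).
Proof.
apply/funext => S; rewrite /cre /fadd; case: insubP => [i _ _|_]; last by rewrite addr0.
by case: ifP => _; rewrite ?addr0 ?mulrDr.
Qed.

Lemma ann_scale k c f : ann k (fscale c f) = fscale c (ann k f).
Proof.
apply/funext => S; rewrite /ann /fscale; case: insubP => [i _ _|_]; last by rewrite mulr0.
by case: ifP => _; rewrite ?mulr0 // mulrCA.
Qed.

Lemma cre_scale k c f : cre k (fscale c f) = fscale c (cre k f).
Proof.
apply/funext => S; rewrite /cre /fscale; case: insubP => [i _ _|_]; last by rewrite mulr0.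
by case: ifP => _; rewrite ?mulr0 // mulrCA.
Qed.

Lemma ann_zero k : ann k fzero = fzero.
Proof.
apply/funext => S; rewrite /ann /fzero; case: insubP => [i _ _|_] //.
by case: ifP => _; rewrite ?mulr0.
Qed.

Lemma cre_zero k : cre k fzero = fzero.
Proof.
apply/funext => S; rewrite /cre /fzero; case: insubP => [i _ _|_] //.
by case: ifP => _; rewrite ?mulr0.
Qed.

Lemma ann_sum (I : Type) (r : seq I) (F : I -> fk) k :
  ann k (fun S => \sum_(x <- r) F x S) = fun S => \sum_(x <- r) ann k (F x) S.
Proof.
apply/funext => S; rewrite /ann; case: insubP => [i _ _|_]; last by rewrite big1.
by case: ifP => _; [rewrite big1 | rewrite mulr_sumr].
Qed.

Lemma cre_sum (I : Type) (r : seq I) (F : I -> fk) k :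
  cre k (fun S => \sum_(x <- r) F x S) = fun S => \sum_(x <- r) cre k (F x) S.
Proof.
apply/funext => S; rewrite /cre; case: insubP => [i _ _|_]; last by rewrite big1.
by case: ifP => _; [rewrite mulr_sumr | rewrite big1].
Qed.

Lemma ann_vac k : ann k vac = fzero.
Proof.
apply/funext => S; rewrite /ann /vac /fzero; case: insubP => [i _ _|_] //.
case: ifP => _ //; case: eqP; rewrite ?mulr0 // => /setP /(_ i).
by rewrite !inE eqxx.
Qed.

Lemma ann_cre k l f : k != l -> ann k (cre l f) = fopp (cre l (ann k f)).
Proof.
move=> kl; apply/funext => S; rewrite /fopp /ann /cre.
case: insubP => [i _ ei|_]; last by case: insubP => [j _ _|_]; rewrite ?oppr0 //; case: ifP; rewrite ?mulr0 ?oppr0.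
case: insubP => [j _ ej|_]; last by case: ifP; rewrite ?mulr0 ?oppr0.
have ij : i != j by apply: contra kl => /eqP eij; rewrite -ei -ej eij.
case: (boolP (i \in S)) => iS.
  by case: ifP => jS; rewrite ?oppr0 // in_setD1 iS andbT ij /= mulr0 oppr0.
rewrite in_setU1 eq_sym (negPf ij) /= in_setD1 (negPf iS) andbF.
case: (boolP (j \in S)) => jS; last by rewrite mulr0 oppr0.
rewrite jw_U1 // jw_D1 //.
have -> : (i |: S) :\ j = i |: (S :\ j).
  apply/setP => x; rewrite !inE; case: (eqVneq x i) => [->|] //=.
  by rewrite ij.
case: (ltngtP i j) => h.
- rewrite /=; ring.
- rewrite /=; ring.
- by move: ij; rewrite -(inj_eq val_inj) /= h eqxx.
Qed.

Lemma ann_cre_same k f : (k < M)%N ->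
  ann k (cre k f) = fadd f (fopp (cre k (ann k f))).
Proof.
move=> kM; apply/funext => S; rewrite /fadd /fopp /ann /cre insubT /=.
set i := Ordinal kM.
case: (boolP (i \in S)) => iS.
  by rewrite setD11 jw_D1self mulrA jw_sq mul1r setD1K // subrr.
by rewrite setU11 jw_U1self mulrA jw_sq mul1r setU1K // subr0.
Qed.

Lemma ann_opp k f : ann k (fopp f) = fopp (ann k f).
Proof.
apply/funext => S; rewrite /ann /fopp; case: insubP => [i _ _|_]; last by rewrite oppr0.
by case: ifP => _; rewrite ?oppr0 ?mulrN.
Qed.

Lemma cre_opp k f : cre k (fopp f) = fopp (cre k f).
Proof.
apply/funext => S; rewrite /cre /fopp; case: insubP => [i _ _|_]; last by rewrite oppr0.
by case: ifP => _; rewrite ?oppr0 ?mulrN.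
Qed.

Lemma fopp0 : fopp fzero = fzero.
Proof. by apply/funext => S; rewrite /fopp /fzero oppr0. Qed.
Lemma foppK f : fopp (fopp f) = f.
Proof. by apply/funext => S; rewrite /fopp opprK. Qed.
Lemma fscale0 c : fscale c fzero = fzero.
Proof. by apply/funext => S; rewrite /fscale /fzero mulr0. Qed.
Lemma fadd0l f : fadd fzero f = f.
Proof. by apply/funext => S; rewrite /fadd /fzero add0r. Qed.
Lemma fadd0r f : fadd f fzero = f.
Proof. by apply/funext => S; rewrite /fadd /fzero addr0. Qed.

Lemma ann_out k f : (M <= k)%N -> ann k f = fzero.
Proof. by move=> kM; apply/funext => S; rewrite /ann insubF // ltnNge kM. Qed.

Lemma aa_cre y z x f : x != y -> x != z ->
  ann z (ann y (cre x f)) = cre x (ann z (ann y f)).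
Proof.
move=> xy xz; rewrite ann_cre; last by rewrite eq_sym.
by rewrite ann_opp ann_cre ?foppK // eq_sym.
Qed.

Lemma num_comm k l f : num k (num l f) = num l (num k f).
Proof.
apply/funext => S; rewrite !numE.
case: insubP => [i _ _|_]; case: insubP => [j _ _|_] //; do ?case: ifP => //.
Qed.

Lemma cre_num k l f : k != l -> cre k (num l f) = num l (cre k f).
Proof.
move=> kl; apply/funext => S; rewrite /cre !numE.
case: insubP => [i _ ei|_]; case: insubP => [j jP ej|jP] //; rewrite ?numE.
- have ij : i != j by apply: contra kl => /eqP eij; rewrite -ei -ej eij.
  case: insubP => [j' _ ej'|]; last by rewrite jP.
  have -> : j' = j by apply: val_inj; rewrite ej ej'.
  rewrite in_setD1 eq_sym ij /=.
  by case: ifP; case: ifP; rewrite ?mulr0.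
- case: insubP => [j' j'P ej'|]; first by move: jP; rewrite j'P.
  by case: ifP; rewrite ?mulr0.
by case: ifP.
Qed.

Definition tog (i : 'I_M) S := if i \in S then S :\ i else i |: S.

Lemma togK i : involutive (tog i).
Proof.
move=> S; rewrite /tog; case: (boolP (i \in S)) => iS.
  by rewrite !inE eqxx /= setD1K.
by rewrite !inE eqxx /= setU1K.
Qed.

Lemma fdot_cre k f g : fdot f (cre k g) = fdot (ann k f) g.
Proof.
rewrite /fdot /cre /ann; case: insubP => [i _ _|_].
  rewrite (reindex_inj (inv_inj (togK i))) /=; apply: eq_bigr => S _.
  rewrite /tog; case: (boolP (i \in S)) => iS.
    by rewrite !inE eqxx /= conjC0 mulr0 mul0r.
  rewrite !inE eqxx /= setU1K // jw_U1self conjM jw_conj; ring.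
by apply: eq_bigr => S _; rewrite conjC0 !mulr0 mul0r.
Qed.

Lemma fdot_ge0 h : 0 <= fdot h h.
Proof. by apply: sumr_ge0 => S _; rewrite mulrC mul_conjC_ge0. Qed.

Lemma fdot_nn_ge0 a b f : 0 <= fdot f (num a (num b f)).
Proof.
apply: sumr_ge0 => S _; rewrite numE.
case: insubP => [i _ _|_]; last by rewrite mulr0.
case: ifP => _; last by rewrite mulr0.
rewrite numE; case: insubP => [j _ _|_]; last by rewrite mulr0.
by case: ifP => _; rewrite ?mulr0 // mulrC mul_conjC_ge0.
Qed.

Lemma fdot_sum (I : Type) (r : seq I) (F : I -> fk) f :
  fdot f (fun S => \sum_(x <- r) F x S) = \sum_(x <- r) fdot f (F x).
Proof.
rewrite /fdot exchange_big /=; apply: eq_bigr => S _; by rewrite mulr_sumr.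
Qed.

Lemma fdot_addr f g h : fdot f (fadd g h) = fdot f g + fdot f h.
Proof. by rewrite /fdot -big_split /=; apply: eq_bigr => S _; rewrite mulrDr. Qed.

Lemma fdot_scaler f c g : fdot f (fscale c g) = c * fdot f g.
Proof. by rewrite /fdot mulr_sumr; apply: eq_bigr => S _; rewrite mulrCA. Qed.

Lemma fdot_addl f g h : fdot (fadd f g) h = fdot f h + fdot g h.
Proof. by rewrite /fdot -big_split /=; apply: eq_bigr => S _; rewrite conjD mulrDl. Qed.

Lemma fdot_scalel f (c : R) g : 0 <= c -> fdot (fscale c%:C f) g = c%:C * fdot f g.
Proof.
move=> c0; rewrite /fdot mulr_sumr; apply: eq_bigr => S _.
by rewrite conjM geC0_conj ?ler0c // mulrA.
Qed.

End Ops.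

Section Ham.
Context {R : realType} {M : nat} (g : R).
Local Notation fk := (fock R M).
Implicit Types (f h : fk) (S : {set 'I_M}).

Definition acoef : R := 3 * expR (- (2 * g ^+ 2)).

Lemma acoef_ge0 : 0 <= acoef.
Proof. by rewrite /acoef mulr_ge0 // expR_ge0. Qed.

Definition Bop k f : fk :=
  fadd (ann k.+2 (ann k.+1 f)) (fscale acoef%:C (ann k.+3 (ann k f))).
Definition Bstar k h : fk :=
  fadd (cre k.+1 (cre k.+2 h)) (fscale acoef%:C (cre k (cre k.+3 h))).

Lemma crecreann a b f : a != b -> cre a (cre b (ann b (ann a f))) = num a (num b f).
Proof.
move=> ab; have -> : cre b (ann b (ann a f)) = num b (ann a f) by [].
rewrite cre_num; [exact: (num_comm b a f) | exact: ab].
Qed.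

Lemma fdot_crecre x y f h : fdot f (cre x (cre y h)) = fdot (ann y (ann x f)) h.
Proof. by rewrite fdot_cre fdot_cre. Qed.

Lemma fdot_Bstar k f h : fdot f (Bstar k h) = fdot (Bop k f) h.
Proof.
rewrite /Bstar /Bop fdot_addr fdot_scaler fdot_addl fdot_scalel ?acoef_ge0 //.
by rewrite !fdot_crecre.
Qed.

Lemma BB_expand k f S : Bstar k (Bop k f) S =
  num k.+1 (num k.+2 f) S + (9 * expR (- (4 * g ^+ 2)))%:C * num k (num k.+3 f) S
  + (3 * expR (- (2 * g ^+ 2)))%:C *
    (cre k.+1 (cre k.+2 (ann k.+3 (ann k f))) S
     + cre k (cre k.+3 (ann k.+2 (ann k.+1 f))) S).
Proof.
rewrite /Bstar /Bop !cre_add !cre_scale /fadd /fscale.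
rewrite crecreann; last by lia.
rewrite (crecreann (a:=k) (b:=k.+3)); last by lia.
have -> : (9 * expR (- (4 * g ^+ 2)))%:C = acoef%:C * acoef%:C.
  rewrite -rmorphM /acoef; congr (_%:C).
  rewrite mulrACA -expRD; congr (_ * expR _); ring.
rewrite /acoef; ring.
Qed.

Definition Iterm k f S : R[i] :=
  if [&& (k.+1 < M)%N, k != 0%N & (k.+2 < M)%N] then num k (num k.+1 f) S else 0.
Definition Rterm k f S : R[i] :=
  if (k.+1 < M)%N && ((k == 0%N) || (M <= k.+2)%N) then num k (num k.+1 f) S else 0.
Definition e4C : R[i] := (4 * expR (- (3 * g ^+ 2) / 2))%:C.

Lemma HMD_decomp f S : HMD g f S = \sum_(k < M)
  ((if (k.+3 < M)%N then Bstar k (Bop k f) S else 0) + Rterm k f S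
   + e4C * (if (k.+2 < M)%N then num k (num k.+2 f) S else 0)).
Proof.
rewrite /HMD.
have tel : \sum_(k < M) (Iterm k.+1 f S - Iterm k f S) = 0.
  rewrite -(big_mkord xpredT (fun k => Iterm k.+1 f S - Iterm k f S)).
  rewrite telescope_sumr // /Iterm.
  have -> : (M.+2 < M)%N = false by lia.
  by rewrite !andbF /= ?andbF /= subrr.
rewrite -[RHS]subr0 -[X in _ - X]tel -sumrB; apply: eq_bigr => k _.
rewrite BB_expand /Iterm /Rterm /e4C.
case: (ltnP k.+3 M) => h3.
  have -> : (k.+2 < M)%N = true by lia.
  have -> : (k.+1 < M)%N = true by lia.
  have -> : (M <= k.+2)%N = false by lia.
  case: (eqVneq (k : nat) 0) => h0 /=; ring.
rewrite /= ?andbF.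
case: (ltnP k.+1 M) => h1 /=; last by ring.
case: (eqVneq (k : nat) 0) => h0 /=; first by ring.
case: (ltnP k.+2 M) => h2 /=; ring.
Qed.

Lemma fdot0 f : fdot f (fun _ => 0) = 0.
Proof. by rewrite /fdot big1 // => S _; rewrite mulr0. Qed.

Lemma HMD_ge0 f : 0 <= fdot f (HMD g f).
Proof.
rewrite (_ : HMD g f = fun S => \sum_(k < M)
  ((if (k.+3 < M)%N then Bstar k (Bop k f) S else 0) + Rterm k f S
   + e4C * (if (k.+2 < M)%N then num k (num k.+2 f) S else 0))); last first.
  by apply: funext => S; exact: HMD_decomp.
rewrite fdot_sum; apply: sumr_ge0 => k _.
rewrite (fdot_addr f (fun S => _ + _)) (fdot_addr f).
rewrite (fdot_scaler f e4C (fun S => if _ then _ else _)).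
apply: addr_ge0; first apply: addr_ge0.
- case: (k.+3 < M)%N; last by rewrite fdot0.
  by rewrite (fdot_Bstar k f (Bop k f)) fdot_ge0.
- rewrite /Rterm; case: (_ && _); last by rewrite fdot0.
  exact: fdot_nn_ge0.
- apply: mulr_ge0; first by rewrite /e4C ler0c mulr_ge0 // expR_ge0.
  case: (k.+2 < M)%N; last by rewrite fdot0.
  exact: fdot_nn_ge0.
Qed.

Lemma Bop_add k f h : Bop k (fadd f h) = fadd (Bop k f) (Bop k h).
Proof.
rewrite /Bop !ann_add; apply/funext => S; rewrite /fadd /fscale; ring.
Qed.

Lemma Bop_scale k c f : Bop k (fscale c f) = fscale c (Bop k f).
Proof.
rewrite /Bop !ann_scale; apply/funext => S; rewrite /fadd /fscale; ring.
Qed.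

Lemma Bop_cre k x f : (x < k)%N -> Bop k (cre x f) = cre x (Bop k f).
Proof.
move=> xk; rewrite /Bop !aa_cre ?cre_add ?cre_scale //; lia.
Qed.

Lemma Bstar_zero k : Bstar k fzero = fzero.
Proof. by rewrite /Bstar !cre_zero fscale0 fadd0r. Qed.

End Ham.

Section PsiSec.
Context {R : realType} {M : nat} (g : R).
Local Notation fk := (fock R M).
Implicit Types (f h : fk) (S : {set 'I_M}).

Definition cc : R[i] := (- acoef g)%:C.

Definition Phi s n : fk :=
  fun S => \sum_(P <- md_partitions s n) foldr (Ablock g) vac P S.

Lemma Phi0 s : Phi s 0 = vac.
Proof. by apply/funext => S; rewrite /Phi /= big_seq1. Qed.

Lemma Phi1 s : Phi s 1 = cre (3 * s) vac.
Proof. by apply/funext => S; rewrite /Phi /= big_seq1. Qed.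

Lemma PhiSS s n : Phi s n.+2 =
  fadd (cre (3 * s) (Phi s.+1 n.+1))
       (fscale cc (cre (3 * s).+1 (cre (3 * s).+2 (Phi s.+2 n)))).
Proof.
apply/funext => S; rewrite /Phi /= big_cat !big_map /= /fadd /fscale.
rewrite !cre_sum mulr_sumr; congr (_ + _).
Qed.

Lemma ann_cre_zero y x f : x != y -> ann y f = fzero -> ann y (cre x f) = fzero.
Proof. by move=> xy e; rewrite ann_cre 1?eq_sym // e cre_zero fopp0. Qed.

Lemma P0 n s y : (y < 3 * s)%N -> ann y (Phi s n) = fzero.
Proof.
elim/ltn_ind: n s => -[|[|n]] IH s ys.
- by rewrite Phi0 ann_vac.
- rewrite Phi1 ann_cre_zero ?ann_vac //; lia.
- rewrite PhiSS ann_add ann_scale ann_cre_zero; last 2 first.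
  + lia.
  + apply: IH => //; lia.
  rewrite ann_cre_zero ?ann_cre_zero ?IH ?fscale0 ?fadd0l //; lia.
Qed.

Lemma P1 n s k : k = (3 * s)%N -> (k < M)%N -> ann k (Phi s n.+1) = Phi s.+1 n.
Proof.
move=> -> kM; case: n => [|n].
  by rewrite Phi1 Phi0 ann_cre_same // ann_vac cre_zero fopp0 fadd0r.
rewrite PhiSS ann_add ann_scale ann_cre_same // (P0 _ (s := s.+1)); last by lia.
rewrite cre_zero fopp0 fadd0r.
rewrite ann_cre_zero ?fscale0 ?fadd0r //; first by lia.
rewrite ann_cre_zero ?P0 //; lia.
Qed.

Lemma P2 n s k : k = (3 * s).+1 -> (k < M)%N ->
  ann k (Phi s n.+2) = fscale cc (cre (3 * s).+2 (Phi s.+2 n)).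
Proof.
move=> -> kM; rewrite PhiSS ann_add ann_scale ann_cre_zero; last 2 first.
- lia.
- apply: P0; lia.
rewrite fadd0l ann_cre_same // ann_cre_zero ?cre_zero ?fopp0 ?fadd0r //; first by lia.
apply: P0; lia.
Qed.

Lemma P3 n s k : k = (3 * s).+2 -> (k < M)%N ->
  ann k (Phi s n.+2) = fscale cc (fopp (cre (3 * s).+1 (Phi s.+2 n))).
Proof.
move=> -> kM; rewrite PhiSS ann_add ann_scale ann_cre_zero; last 2 first.
- lia.
- apply: P0; lia.
rewrite fadd0l ann_cre; last by lia.
rewrite ann_cre_same // (P0 _ (s := s.+2)); last by lia.
by rewrite cre_zero fopp0 fadd0r.
Qed.

Lemma P4 s k : k != (3 * s)%N -> ann k (Phi s 1) = fzero.
Proof. by move=> ks; rewrite Phi1 ann_cre_zero ?ann_vac // eq_sym. Qed.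

Lemma aa_peel n s y z : ((3 * s).+2 < y)%N -> ((3 * s).+2 < z)%N ->
  ann z (ann y (Phi s n.+2)) =
  fadd (cre (3 * s) (ann z (ann y (Phi s.+1 n.+1))))
       (fscale cc (cre (3 * s).+1 (cre (3 * s).+2 (ann z (ann y (Phi s.+2 n)))))).
Proof.
move=> hy hz; rewrite PhiSS !ann_add !ann_scale !aa_cre //; lia.
Qed.

Lemma Q1 n s k : ann k.+2 (ann k (Phi s n)) = fzero.
Proof.
case: (ltnP k M) => kM; last by rewrite (ann_out _ kM) ann_zero.
elim/ltn_ind: n s k kM => n IH s k kM.
case: (ltnP k (3 * s)) => ks; first by rewrite P0 // ann_zero.
case: n IH => [|[|n]] IH.
- by rewrite Phi0 ann_vac ann_zero.
- case: (eqVneq k (3 * s)) => e; last by rewrite P4 // ann_zero.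
  by rewrite (P1 _ e) // Phi0 ann_vac.
- case: (ltnP k (3 * s).+3) => k3.
    have : [|| k == 3 * s, k == (3 * s).+1 | k == (3 * s).+2]%N by lia.
    case/or3P => /eqP e; subst k.
    + by rewrite (P1 _ erefl) // P0 //; lia.
    + rewrite (P2 _ erefl) // ann_scale ann_cre_zero ?fscale0 //; first by lia.
      by apply: P0; lia.
    + rewrite (P3 _ erefl) // ann_scale ann_opp ann_cre_zero ?fopp0 ?fscale0 //; first by lia.
      by apply: P0; lia.
  rewrite aa_peel; [|lia|lia].
  by rewrite !IH // !cre_zero fscale0 fadd0l.
Qed.

Lemma Q3 n s L : L = (3 * (s + n))%N -> ann L.-1 (ann L (Phi s n.+1)) = fzero.
Proof.
case: (ltnP L M) => LM; last by move=> _; rewrite (ann_out _ LM) ann_zero.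
elim/ltn_ind: n s L LM => n IH s L LM eL.
case: n IH eL => [|[|n]] IH eL.
- rewrite (P1 0 (s := s) (k := L)); [|lia|lia].
  by rewrite Phi0 ann_vac.
- rewrite PhiSS ann_add ann_scale ann_cre; last by lia.
  rewrite (P1 _ (s := s.+1)); [|lia|lia].
  rewrite Phi0 ann_cre_zero; last 2 first.
  + lia.
  + by rewrite ann_cre_zero ?ann_vac //; lia.
  rewrite fscale0 fadd0r ann_opp ann_cre_zero ?fopp0 ?ann_vac //; lia.
- rewrite aa_peel; [|lia|lia].
  rewrite (IH n.+1) //; try lia.
  rewrite (IH n) //; try lia.
  by rewrite !cre_zero fscale0 fadd0l.
Qed.

Lemma Bzero n s j : (3 * s <= j.+3)%N -> (j.+3 <= 3 * (s + n) - 3)%N -> (j.+3 < M)%N ->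
  Bop g j (Phi s n) = fzero.
Proof.
elim/ltn_ind: n s j => n IH s j h1 h2 hM.
case: (ltnP j (3 * s)) => js.
  rewrite /Bop (P0 _ js) ann_zero fscale0 fadd0r.
  case: (ltnP j.+1 (3 * s)) => j1; first by rewrite P0 // ann_zero.
  case: n IH h2 => [|n] IH h2; first by lia.
  rewrite (P1 _ (k := j.+1)); [|lia|lia].
  by apply: P0; lia.
case: n IH h2 => [|[|n]] IH h2; try lia.
case: (ltnP j (3 * s).+3) => j3.
  have : [|| j == 3 * s, j == (3 * s).+1 | j == (3 * s).+2]%N by lia.
  case/or3P => /eqP e; subst j.
  - rewrite /Bop (P2 _ erefl); last by lia.
    rewrite ann_scale ann_cre_same; last by lia.
    rewrite (P0 _ (s := s.+2)); last by lia.
    rewrite cre_zero fopp0 fadd0r (P1 _ erefl); last by lia.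
    rewrite (P1 _ (s := s.+1)); [|lia|lia].
    apply/funext => S; rewrite /fadd /fscale /fzero /cc /acoef rmorphN /=; ring.
  - rewrite /Bop (P3 _ erefl); last by lia.
    rewrite ann_scale ann_opp ann_cre_zero; [|lia|apply: P0; lia].
    rewrite (P2 _ erefl); last by lia.
    rewrite ann_scale ann_cre_zero; [|lia|apply: P0; lia].
    by rewrite fopp0 !fscale0 fadd0r.
  - rewrite /Bop (P3 _ erefl); last by lia.
    rewrite ann_scale ann_opp ann_cre_zero; [|lia|apply: P0; lia].
    rewrite fopp0 !fscale0 fadd0r.
    rewrite PhiSS ann_add ann_scale ann_cre; last by lia.
    rewrite (P1 _ (s := s.+1)); [|lia|lia].
    rewrite (ann_cre_zero (x := (3 * s).+1)); [|lia|].
      rewrite fscale0 fadd0r ann_opp ann_cre_zero ?fopp0 //; [lia|apply: P0; lia].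
    rewrite ann_cre_zero //; [lia|apply: P0; lia].
rewrite PhiSS Bop_add Bop_scale !Bop_cre; [|lia|lia|lia].
rewrite (IH n.+1) //; try lia.
rewrite (IH n) //; try lia.
by rewrite !cre_zero fscale0 fadd0l.
Qed.

Lemma nn_zero a b h : a != b -> ann a (ann b h) = fzero -> num a (num b h) = fzero.
Proof.
move=> ab e; have -> : num b h = cre b (ann b h) by [].
rewrite -cre_num; last by rewrite eq_sym.
by rewrite /num e !cre_zero.
Qed.

Lemma Phi_neq0 n s : (3 * (s + n) <= M + 2)%N -> Phi s n <> fzero.
Proof.
elim: n s => [|n IH] s h.
  rewrite Phi0 => /(congr1 (fun F => F set0)); rewrite /vac /fzero eqxx.
  by apply/eqP; exact: oner_neq0.
move=> e; apply: (IH s.+1); first by lia.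
rewrite -(P1 n (k := 3 * s) (s := s)) //; last by lia.
by rewrite e ann_zero.
Qed.

End PsiSec.

Theorem proposition3p2 (R : realType) (g : R) (hg : 0 < g) (N : nat) (hN : (1 <= N)%N) :
  (forall f : fock R (3 * N - 2), 0 <= fdot f (HMD g f))
  /\ HMD g (PsiMD (M := 3 * N - 2) g N) = (fun _ => 0)
  /\ PsiMD (M := 3 * N - 2) g N <> (fun _ => 0).
Proof.
have ePsi : PsiMD (M := 3 * N - 2) g N = Phi (M := 3 * N - 2) g 0 N by [].
split; first by move=> f; exact: HMD_ge0.
rewrite ePsi; split; last first.
  by apply: Phi_neq0; lia.
apply/funext => S; rewrite HMD_decomp big1 // => k _.
set Psi := Phi g 0 N.
have [n eN] : exists n, N = n.+1 by exists N.-1; lia.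
have t1 : (if (k.+3 < 3 * N - 2)%N then Bstar g k (Bop g k Psi) S else 0) = 0.
  case: ifP => h //.
  by rewrite Bzero ?Bstar_zero //; lia.
have t2 : Rterm k Psi S = 0.
  rewrite /Rterm; case: ifP => // /andP [h1 /orP [/eqP k0 | hk]].
    rewrite k0 num_comm nn_zero //.
    have -> : Psi = Phi g 0 n.+1 by rewrite /Psi -eN.
    rewrite (P1 g n (k := 0) (s := 0)) //; last by lia.
    by apply: P0.
  rewrite nn_zero //; first by lia.
  have -> : Psi = Phi g 0 n.+1 by rewrite /Psi -eN.
  apply: (Q3 g (n := n) (s := 0) (L := k.+1)); lia.
have t3 : (if (k.+2 < 3 * N - 2)%N then num k (num k.+2 Psi) S else 0) = 0.
  case: ifP => h //.
  by rewrite num_comm nn_zero ?Q1 //; lia.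
by rewrite t1 t2 t3 mulr0 !addr0.
Qed.
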